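(* Let $\mathcal P_{XY}$ be any distribution on $\mathbb R^p\times\mathbb R$ and let $Z_i=(X_i,Y_i)$, $i=1,\dots,n+1$, be i.i.d. from $\mathcal P_{XY}$. Let $\mathcal Z,\mathcal X$ be the unordered sets $\{Z_1,\dots,Z_{n+1}\}$, $\{X_1,\dots,X_{n+1}\}$; let $V(z)=V(z;\mathcal Z)$ be a real-valued score function depending on the data only through $\mathcal Z$, with $V_i=V(Z_i;\mathcal Z)$; let $H:\mathbb R^p\times\mathbb R^p\to[0,1]$ be a localizer depending on the data only through $\mathcal X$, with $H(x,x)=1$. Put $H_{ij}=H(X_i,X_j)$, $p^H_{ij}=H_{ij}/\sum_{k=1}^{n+1}H_{ik}$, $\hat{\mathcal F}_i=\sum_{j=1}^{n+1}p^H_{ij}\delta_{V_j}$, $\hat{\mathcal F}=\sum_{j=1}^{n}p^H_{n+1,j}\delta_{V_j}+p^H_{n+1,n+1}\delta_{+\infty}$ and $\Gamma=\{\sum_{k\in I}p^H_{ik}: i\in\{1,\dots,n+1\},\ I\subseteq\{1,\dots,n+1\}\}$. Fix $\alpha\in(0,1)$. Let $\tilde\alpha_1$ be the smallest value and $\tilde\alpha_2$ the largest value in $\Gamma\cup\{0\}$ such that, respectively, $$\alpha_1:=\frac{1}{n+1}\sum_{i=1}^{n+1}\mathbb 1\{V_i\le Q(\tilde\alpha_1;\hat{\mathcal F}_i)\}\ge\alpha,\qquad \alpha_2:=\frac{1}{n+1}\sum_{i=1}^{n+1}\mathbb 1\{V_i\le Q(\tilde\alpha_2;\hat{\mathcal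 F}_i)\}<\alpha.$$ Let $\tilde\alpha=\tilde\alpha_1$ with probability $\frac{\alpha-\alpha_2}{\alpha_1-\alpha_2}$ and $\tilde\alpha=\tilde\alpha_2$ with probability $\frac{\alpha_1-\alpha}{\alpha_1-\alpha_2}$, using randomization independent of everything else. Then $\mathbb P\{V_{n+1}\le Q(\tilde\alpha;\hat{\mathcal F})\}=\alpha$.
   Context: For a distribution $\mathcal F$ on $\mathbb R\cup\{\pm\infty\}$, $Q(\alpha;\mathcal F)=\inf\{t:\mathbb P_{T\sim\mathcal F}(T\le t)\ge\alpha\}$ (so $Q(0;\mathcal F)=-\infty$). $\delta_v$ is the point mass at $v$. *)

(* Defs.v *)
From HB Require Import structures.
From mathcomp Require Import all_boot all_order all_algebra all_fingroup.
From mathcomp Require Import all_classical all_reals all_analysis.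
Set Implicit Arguments. Unset Strict Implicit. Unset Printing Implicit Defensive.
Import Order.TTheory GRing.Theory Num.Theory.
Local Open Scope classical_set_scope.
Local Open Scope ring_scope.

Section Defs.
Variable R : realType.

(* cdf at t of the discrete distribution sum_j w j * delta_(v j), values in \bar R *)
Definition discr_cdf (m : nat) (w : 'I_m -> R) (v : 'I_m -> \bar R) (t : \bar R) : R :=
  \sum_(j < m | (v j <= t)%E) w j.

Definition Qd (m : nat) (w : 'I_m -> R) (v : 'I_m -> \bar R) (a : R) : \bar R :=
  ereal_inf [set t : \bar R | a <= discr_cdf w v t].

Definition pH (m : nat) (h : 'I_m -> 'I_m -> R) (i j : 'I_m) : R :=
  h i j / \sum_(k < m) h i k.

Definition Gamma (m : nat) (pm : 'I_m -> 'I_m -> R) : set R :=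
  [set x | exists (i : 'I_m) (I : {set 'I_m}), x = \sum_(k in I) pm i k].

Definition cov_frac (m : nat) (v : 'I_m -> R) (pm : 'I_m -> 'I_m -> R) (a : R) : R :=
  (\sum_(i < m) ((((v i)%:E <= Qd (pm i) (fun j => (v j)%:E) a)%E : bool) : nat)%:R)
  / m%:R.

(* Fhat = sum_(j<=n) p_(n+1,j) delta_(V_j) + p_(n+1,n+1) delta_(+oo): values *)
Definition vals_inf (n : nat) (v : 'I_n.+1 -> R) (j : 'I_n.+1) : \bar R :=
  if j == ord_max then +oo%E else (v j)%:E.

(* generating rectangles of the Borel sigma-algebra on the data space (R^p x R)^(n+1) *)
Definition data_rects (n p : nat) : set (set ('I_n.+1 -> 'rV[R]_p * R)) :=
  [set S | exists (A : 'I_n.+1 -> 'I_p -> set R) (B : 'I_n.+1 -> set R),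
     (forall i k, measurable (A i k)) /\ (forall i, measurable (B i)) /\
     S = [set z : 'I_n.+1 -> 'rV[R]_p * R | forall i, (forall k, A i k ((z i).1 ord0 k)) /\ B i (z i).2]].

Definition xdata_rects (n p : nat) : set (set ('I_n.+1 -> 'rV[R]_p)) :=
  [set S | exists (A : 'I_n.+1 -> 'I_p -> set R),
     (forall i k, measurable (A i k)) /\
     S = [set z : 'I_n.+1 -> 'rV[R]_p | forall i k, A i k (z i ord0 k)]].

Definition data_measurable (n p : nat) (f : ('I_n.+1 -> 'rV[R]_p * R) -> R) :=
  forall C : set R, measurable C -> <<s @data_rects n p >> (f @^-1` C).

Definition xdata_measurable (n p : nat) (f : ('I_n.+1 -> 'rV[R]_p) -> R) :=
  forall C : set R, measurable C -> <<s @xdata_rects n p >> (f @^-1` C).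

Definition Zevent d (Omega : measurableType d) (n p : nat)
  (X : 'I_n.+1 -> Omega -> 'rV[R]_p) (Y : 'I_n.+1 -> Omega -> R)
  (i : 'I_n.+1) (A : 'I_p -> set R) (B : set R) : set Omega :=
  [set w | (forall k, A k (X i w ord0 k)) /\ B (Y i w)].

End Defs.

(* Main.v *)
Require Import Defs.
From HB Require Import structures.
From mathcomp Require Import all_boot all_order all_algebra all_fingroup.
From mathcomp Require Import all_classical all_reals all_analysis.
From mathcomp Require Import measurable_realfun.
From mathcomp Require Import ring lra.
Import Order.TTheory GRing.Theory Num.Theory numFieldNormedType.Exports.
Local Open Scope classical_set_scope.
Local Open Scope ring_scope.

Section QdSec.
Variable R : realType.

Lemma sum_sub_le (m : nat) (w : 'I_m -> R) (P Q : pred 'I_m) :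
  (forall j, 0 <= w j) -> (forall j, P j -> Q j) ->
  \sum_(j < m | P j) w j <= \sum_(j < m | Q j) w j.
Proof.
move=> w0 PQ; rewrite [X in X <= _]big_mkcond [X in _ <= X]big_mkcond.
apply: ler_sum => j _; have := PQ j.
by case: (P j); case: (Q j) => //= /(_ isT).
Qed.

Lemma Qd_leP (m : nat) (w : 'I_m -> R) (v : 'I_m -> \bar R) (x : R) (a : R) :
  (forall j, 0 <= w j) ->
  ((x%:E <= Qd w v a)%E <-> \sum_(j < m | (v j < x%:E)%E) w j < a).
Proof.
move=> w0; split.
- move=> hx; rewrite ltNge; apply/negP => ha.
  pose t := \big[Order.max/-oo%E]_(j < m | (v j < x%:E)%E) v j.
  have tx : (t < x%:E)%E.
    rewrite /t; elim/big_ind: _ => //; first exact: ltNyr.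
    by move=> y1 y2 h1 h2; rewrite gt_max h1 h2.
  have : (Qd w v a <= t)%E.
    apply: ereal_inf_lbound; rewrite /= /discr_cdf; apply: le_trans ha _.
    apply: sum_sub_le => // j hj; rewrite /t.
    by rewrite (bigD1 j) //= le_max lexx.
  move=> /(le_trans hx) => xt.
  by move: (le_lt_trans xt tx); rewrite ltxx.
- move=> hs; apply: le_ereal_inf_tmp => t /= ht.
  rewrite leNgt; apply/negP => tx.
  have : discr_cdf w v t <= \sum_(j < m | (v j < x%:E)%E) w j.
    apply: sum_sub_le => // j hj; exact: le_lt_trans hj tx.
  move=> h; have := le_lt_trans (le_trans ht h) hs; by rewrite ltxx.
Qed.

Lemma Qd_leE (m : nat) (w : 'I_m -> R) (v : 'I_m -> \bar R) (x : R) (a : R) :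
  (forall j, 0 <= w j) ->
  (x%:E <= Qd w v a)%E = (\sum_(j < m | (v j < x%:E)%E) w j < a).
Proof.
move=> w0; have [h1 h2] := Qd_leP m w v x a w0.
case: (boolP (x%:E <= Qd w v a)%E) => h; first by rewrite h1.
by case: (boolP (\sum_(j < m | (v j < x%:E)%E) w j < a)) => // /h2 h'; rewrite h' in h.
Qed.
End QdSec.

Definition Dt (R : realType) (n p : nat) := ('I_n.+1 -> 'rV[R]_p * R)%type.
HB.instance Definition _ (R : realType) n p := Choice.on (Dt R n p).
HB.instance Definition _ (R : realType) n p := isPointed.Build (Dt R n p) (fun _ => (0, 0)).
Definition Dm (R : realType) n p := g_sigma_algebraType (@data_rects R n p : set (set (Dt R n p))).
Definition Xt (R : realType) (n p : nat) := ('I_n.+1 -> 'rV[R]_p)%type.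
HB.instance Definition _ (R : realType) n p := Choice.on (Xt R n p).
HB.instance Definition _ (R : realType) n p := isPointed.Build (Xt R n p) (fun _ => 0).
Definition Xm (R : realType) n p := g_sigma_algebraType (@xdata_rects R n p : set (set (Xt R n p))).

Section DataSec.
Variables (R : realType) (n p : nat).
Variable V : ('I_n.+1 -> 'rV[R]_p * R) -> 'rV[R]_p * R -> R.
Hypothesis hVsym : forall (s : 'S_n.+1) z t, V (z \o s) t = V z t.
Variable H : ('I_n.+1 -> 'rV[R]_p) -> 'rV[R]_p -> 'rV[R]_p -> R.
Hypothesis hHsym : forall (s : 'S_n.+1) xs x x', H (xs \o s) x x' = H xs x x'.
Hypothesis hH01 : forall xs x x', 0 <= H xs x x' <= 1.
Hypothesis hHdiag : forall xs x, H xs x x = 1.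
Hypothesis hVmeas : forall j, data_measurable (fun z => V z (z j)).
Hypothesis hHmeas : forall i j, xdata_measurable (fun xs => H xs (xs i) (xs j)).
Variable alpha : R.

Local Notation D := ('I_n.+1 -> 'rV[R]_p * R)%type.
Local Notation Cand := (option ('I_n.+1 * {set 'I_n.+1}))%type.
Local Notation DM := (Dm R n p).

Definition vsD (z : D) (j : 'I_n.+1) : R := V z (z j).
Definition xsD (z : D) : 'I_n.+1 -> 'rV[R]_p := fun k => (z k).1.
Definition hD (z : D) (i j : 'I_n.+1) : R := H (xsD z) (z i).1 (z j).1.
Definition pmD (z : D) := pH (hD z).
Definition sD (z : D) (i : 'I_n.+1) : R :=
  \sum_(j < n.+1 | vsD z j < vsD z i) pmD z i j.
Definition covD (z : D) (g : R) := cov_frac (vsD z) (pmD z) g.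
Definition cntR (z : D) (g : R) : R := \sum_(i < n.+1) (((sD z i < g)%R : bool) : nat)%:R.
Definition Gv (z : D) (c : Cand) : R :=
  if c is Some (i, A) then \sum_(k in A) pmD z i k else 0.
Definition G0D (z : D) (g : R) := exists c, g = Gv z c.
Definition spec1 (z : D) (g : R) :=
  G0D z g /\ alpha <= covD z g /\ forall g', G0D z g' -> alpha <= covD z g' -> g <= g'.
Definition spec2 (z : D) (g : R) :=
  G0D z g /\ covD z g < alpha /\ forall g', G0D z g' -> covD z g' < alpha -> g' <= g.
Definition at1D (z : D) := xget 0 (spec1 z).
Definition at2D (z : D) := xget 0 (spec2 z).

Lemma hD_ge0 z i j : 0 <= hD z i j.
Proof. by have /andP[] := hH01 (xsD z) (z i).1 (z j).1. Qed.

Lemma den_ge1 z i : 1 <= \sum_(k < n.+1) hD z i k.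
Proof.
rewrite (bigD1 i) //= {1}/hD hHdiag lerDl.
by apply: sumr_ge0 => k _; exact: hD_ge0.
Qed.

Lemma pmD_ge0 z i j : 0 <= pmD z i j.
Proof.
rewrite /pmD /pH divr_ge0 ?hD_ge0 //.
exact: le_trans (den_ge1 z i).
Qed.

Lemma covDE z g : covD z g = cntR z g / n.+1%:R.
Proof.
rewrite /covD /cov_frac /cntR; congr (_ / _); apply: eq_bigr => i _.
congr ((_ : nat)%:R); rewrite Qd_leE; last exact: pmD_ge0.
by under eq_bigl do rewrite lte_fin.
Qed.

Section Perm.
Variable s : 'S_n.+1.

Lemma vsD_perm z j : vsD (z \o s) j = vsD z (s j).
Proof. by rewrite /vsD hVsym. Qed.

Lemma hD_perm z i j : hD (z \o s) i j = hD z (s i) (s j).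
Proof. by rewrite /hD -(hHsym s (xsD z)). Qed.

Lemma pmD_perm z i j : pmD (z \o s) i j = pmD z (s i) (s j).
Proof.
rewrite /pmD /pH hD_perm; congr (_ / _).
rewrite [RHS](reindex_inj (@perm_inj _ s)) /=.
by apply: eq_bigr => k _; rewrite hD_perm.
Qed.

Lemma sD_perm z i : sD (z \o s) i = sD z (s i).
Proof.
rewrite /sD [RHS](reindex_inj (@perm_inj _ s)) /=.
by apply: eq_big => [j|j _]; rewrite ?vsD_perm ?pmD_perm.
Qed.

Lemma cntR_perm z g : cntR (z \o s) g = cntR z g.
Proof.
rewrite /cntR [RHS](reindex_inj (@perm_inj _ s)) /=.
by apply: eq_bigr => i _; rewrite sD_perm.
Qed.

Lemma covD_perm z g : covD (z \o s) g = covD z g.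
Proof. by rewrite !covDE cntR_perm. Qed.

Lemma Gv_perm z c : exists c', Gv (z \o s) c = Gv z c'.
Proof.
case: c => [[i A]|]; last by exists None.
exists (Some (s i, s @: A)) => /=.
rewrite big_imset /=; last by move=> x y _ _; exact: perm_inj.
by apply: eq_bigr => k _; rewrite pmD_perm.
Qed.
End Perm.

Lemma comp_permK (z : D) (s : 'S_n.+1) : (z \o s) \o (s^-1)%g = z.
Proof. by apply: funext => i /=; rewrite permKV. Qed.

Lemma G0D_perm (s : 'S_n.+1) z g : G0D (z \o s) g <-> G0D z g.
Proof.
split=> -[c ->].
- by have [c' ->] := Gv_perm s z c; exists c'.
- have [c' e] := Gv_perm (s^-1)%g (z \o s) c.
  by rewrite comp_permK in e; exists c'; rewrite e.
Qed.

Lemma G0D_permE (s : 'S_n.+1) z : G0D (z \o s) = G0D z.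
Proof. by apply: funext => g; apply: propext; exact: G0D_perm. Qed.

Lemma covD_permE (s : 'S_n.+1) z : covD (z \o s) = covD z.
Proof. by apply: funext => g; exact: covD_perm. Qed.

Lemma spec1_perm (s : 'S_n.+1) z : spec1 (z \o s) = spec1 z.
Proof. by rewrite /spec1 G0D_permE covD_permE. Qed.

Lemma spec2_perm (s : 'S_n.+1) z : spec2 (z \o s) = spec2 z.
Proof. by rewrite /spec2 G0D_permE covD_permE. Qed.

Lemma at1D_perm (s : 'S_n.+1) z : at1D (z \o s) = at1D z.
Proof. by rewrite /at1D spec1_perm. Qed.

Lemma at2D_perm (s : 'S_n.+1) z : at2D (z \o s) = at2D z.
Proof. by rewrite /at2D spec2_perm. Qed.

Lemma spec1_uniq z g g' : spec1 z g -> spec1 z g' -> g = g'.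
Proof.
move=> [h1 [h2 h3]] [h1' [h2' h3']]; apply/eqP; rewrite eq_le.
by rewrite h3 // h3'.
Qed.

Lemma spec2_uniq z g g' : spec2 z g -> spec2 z g' -> g = g'.
Proof.
move=> [h1 [h2 h3]] [h1' [h2' h3']]; apply/eqP; rewrite eq_le.
by rewrite h3 // h3'.
Qed.

Lemma at1D_eq z g : spec1 z g -> at1D z = g.
Proof. by move=> h; exact: (spec1_uniq _ _ _ (xgetI 0 h) h). Qed.

Lemma at2D_eq z g : spec2 z g -> at2D z = g.
Proof. by move=> h; exact: (spec2_uniq _ _ _ (xgetI 0 h) h). Qed.



Lemma mV j : measurable_fun [set: DM] (fun z : DM => vsD z j).
Proof. by move=> _ C mC; rewrite setTI; exact: hVmeas. Qed.

Lemma mxs : measurable_fun [set: DM] (xsD : DM -> Xm R n p).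
Proof.
apply: measurability; first reflexivity.
move=> _ [B [A [mA ->]] <-]; rewrite setTI; apply: sub_gen_smallest.
exists A, (fun _ => setT); split => //; split => //.
by apply/seteqP; split => z /= h i; [split | case: (h i)].
Qed.

Lemma mhD i j : measurable_fun [set: DM] (fun z : DM => hD z i j).
Proof.
have mh : measurable_fun [set: Xm R n p] (fun xs => H xs (xs i) (xs j)).
  by move=> _ C mC; rewrite setTI; exact: hHmeas.
exact: (measurableT_comp mh mxs).
Qed.

Lemma minv_cont : continuous (fun x : R => (Num.max x 1)^-1).
Proof.
move=> x.
apply: (continuousV (s := fun x : R => Num.max x 1)).
  by rewrite gt_eqF // (lt_le_trans ltr01) // le_max lexx orbT.
apply: (@continuous_max R R (fun x : R => x) (fun _ => 1)); [exact: cvg_id | exact: cvg_cst].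
Qed.

Lemma pmD_alt z i j : pmD z i j = hD z i j * (Num.max (\sum_(k < n.+1) hD z i k) 1)^-1.
Proof. by rewrite /pmD /pH max_l // den_ge1. Qed.

Lemma mpmD i j : measurable_fun [set: DM] (fun z : DM => pmD z i j).
Proof.
rewrite (_ : (fun z => _) = (fun z : DM => hD z i j * (Num.max (\sum_(k < n.+1) hD z i k) 1)^-1)); last first.
  by apply: funext => z; rewrite pmD_alt.
apply: measurable_funM; first exact: mhD.
apply: (measurableT_comp (continuous_measurable_fun minv_cont)).
by apply: measurable_sum => k; exact: mhD.
Qed.

Lemma msD i : measurable_fun [set: DM] (fun z : DM => sD z i).
Proof.
rewrite (_ : (fun z => _) = (fun z : DM => \sum_(j < n.+1) (if vsD z j < vsD z i then pmD z i j else 0))); last first.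
  by apply: funext => z; rewrite /sD big_mkcond.
apply: measurable_sum => j; apply: measurable_fun_ifT.
- by apply: measurable_fun_ltr; exact: mV.
- exact: mpmD.
- exact: measurable_cst.
Qed.

Lemma mGv c : measurable_fun [set: DM] (fun z : DM => Gv z c).
Proof.
case: c => [[i A]|]; last exact: measurable_cst.
rewrite (_ : (fun z => _) = (fun z : DM => \sum_(k < n.+1) (if k \in A then pmD z i k else 0))); last first.
  by apply: funext => z; rewrite /= big_mkcond.
apply: measurable_sum => k; case: (k \in A); [exact: mpmD | exact: measurable_cst].
Qed.

Lemma mcnt (F : DM -> R) : measurable_fun [set: DM] F ->
  measurable_fun [set: DM] (fun z : DM => cntR z (F z)).
Proof.
move=> mF.
rewrite (_ : (fun z => _) = (fun z : DM => \sum_(i < n.+1) (if sD z i < F z then 1 else 0))); last first.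
  by apply: funext => z; rewrite /cntR; apply: eq_bigr => i _; case: (_ < _).
apply: measurable_sum => i; apply: measurable_fun_ifT.
- by apply: measurable_fun_ltr => //; exact: msD.
- exact: measurable_cst.
- exact: measurable_cst.
Qed.

Lemma mcov (F : DM -> R) : measurable_fun [set: DM] F ->
  measurable_fun [set: DM] (fun z : DM => covD z (F z)).
Proof.
move=> mF.
rewrite (_ : (fun z => _) = (fun z : DM => cntR z (F z) * (n.+1%:R)^-1)); last first.
  by apply: funext => z; rewrite covDE.
by apply: measurable_funM; [exact: mcnt | exact: measurable_cst].
Qed.

Lemma mlt (f g : DM -> R) : measurable_fun [set: DM] f -> measurable_fun [set: DM] g ->
  measurable [set z : DM | f z < g z].
Proof.
move=> mf mg; rewrite -[X in measurable X]setTI.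
by apply: (measurable_fun_ltr mf mg measurableT).

Qed.

Lemma mle (f g : DM -> R) : measurable_fun [set: DM] f -> measurable_fun [set: DM] g ->
  measurable [set z : DM | f z <= g z].
Proof.
move=> mf mg; rewrite -[X in measurable X]setTI.
by apply: (measurable_fun_ler mf mg measurableT).

Qed.

Lemma meq (f : DM -> R) r : measurable_fun [set: DM] f ->
  measurable [set z : DM | f z = r].
Proof.
move=> mf; have := mf measurableT [set r] (measurable_set1 r).
by rewrite setTI.
Qed.


Lemma m_at (spec Q : D -> R -> Prop) :
  (forall z g g', spec z g -> spec z g' -> g = g') ->
  (forall z g, spec z g -> G0D z g) ->
  (forall c, measurable [set z : DM | spec z (Gv z c)]) ->
  (forall c, measurable [set z : DM | Q z (Gv z c)]) ->
  measurable [set z : DM | Q z 0] ->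
  measurable [set z : DM | Q z (xget 0 (spec z))].
Proof.
move=> su sG ms mQ mQ0.
suff -> : [set z : DM | Q z (xget 0 (spec z))] =
  \bigcup_(c in [set: Cand]) ([set z : DM | spec z (Gv z c)] `&` [set z : DM | Q z (Gv z c)])
  `|` ((\bigcap_(c in [set: Cand]) ~` [set z : DM | spec z (Gv z c)]) `&` [set z : DM | Q z 0]).
  apply: measurableU.
  - apply: fin_bigcup_measurable; first exact: finite_finset.
    by move=> c _; exact: measurableI.
  - apply: measurableI => //; apply: fin_bigcap_measurable; first exact: finite_finset.
    by move=> c _; exact: measurableC.
apply/seteqP; split => z /=.
- case: (pselect (exists c, spec z (Gv z c))) => [[c hc]|hn].
  + by rewrite (su _ _ _ (xgetI 0 hc) hc) => hq; left; exists c.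
  + rewrite xgetPN; first by move=> hq; right; split => // c _ /= hc; apply: hn; exists c.
    by move=> g hg; have [c hc] := sG _ _ hg; apply: hn; exists c; rewrite -hc.
- case=> [[c _ [hc hq]]|[hn hq]].
  + have hc' : spec z (Gv z c) := hc.
    by rewrite (su _ _ _ (xgetI 0 hc') hc').
  + rewrite xgetPN // => g hg; have [c hc] := sG _ _ hg; apply: (hn c I).
    by rewrite /= -hc.
Qed.

Lemma mM1 c : measurable [set z : DM | spec1 z (Gv z c)].
Proof.
suff -> : [set z : DM | spec1 z (Gv z c)] =
  [set z : DM | alpha <= covD z (Gv z c)] `&` \bigcap_(c' in [set: Cand])
    ([set z : DM | covD z (Gv z c') < alpha] `|` [set z : DM | Gv z c <= Gv z c']).
  apply: measurableI.
    by apply: mle; [exact: measurable_cst | apply: mcov; exact: mGv].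
  apply: fin_bigcap_measurable; first exact: finite_finset.
  move=> c' _; apply: measurableU.
    by apply: mlt; [apply: mcov; exact: mGv | exact: measurable_cst].
  by apply: mle; exact: mGv.
apply/seteqP; split => z /=.
- move=> [_ [h2 h3]]; split => // c' _ /=.
  case: (boolP (covD z (Gv z c') < alpha)) => h; first by left.
  by right; apply: h3; [exists c' | rewrite leNgt].
- move=> [h2 h3]; split; first by exists c.
  split => // g' [c' ->] h.
  case: (h3 c' I) => //= h'.
  by move: (lt_le_trans h' h); rewrite ltxx.
Qed.

Lemma mM2 c : measurable [set z : DM | spec2 z (Gv z c)].
Proof.
suff -> : [set z : DM | spec2 z (Gv z c)] =
  [set z : DM | covD z (Gv z c) < alpha] `&` \bigcap_(c' in [set: Cand])
    ([set z : DM | alpha <= covD z (Gv z c')] `|` [set z : DM | Gv z c' <= Gv z c]).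
  apply: measurableI.
    by apply: mlt; [apply: mcov; exact: mGv | exact: measurable_cst].
  apply: fin_bigcap_measurable; first exact: finite_finset.
  move=> c' _; apply: measurableU.
    by apply: mle; [exact: measurable_cst | apply: mcov; exact: mGv].
  by apply: mle; exact: mGv.
apply/seteqP; split => z /=.
- move=> [_ [h2 h3]]; split => // c' _ /=.
  case: (boolP (covD z (Gv z c') < alpha)) => h; last by left; rewrite leNgt.
  by right; apply: h3 => //; exists c'.
- move=> [h2 h3]; split; first by exists c.
  split => // g' [c' ->] h.
  case: (h3 c' I) => //= h'.
  by move: (lt_le_trans h h'); rewrite ltxx.
Qed.

Lemma mcnt1 (k : R) : measurable [set z : DM | cntR z (at1D z) = k].
Proof.
rewrite /at1D; apply: (m_at spec1 (fun z g => cntR z g = k) spec1_uniq).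
- by move=> z g [].
- exact: mM1.
- by move=> c; apply: meq; apply: mcnt; exact: mGv.
- by apply: meq; apply: mcnt; exact: measurable_cst.
Qed.

Lemma mcnt2 (k : R) : measurable [set z : DM | cntR z (at2D z) = k].
Proof.
rewrite /at2D; apply: (m_at spec2 (fun z g => cntR z g = k) spec2_uniq).
- by move=> z g [].
- exact: mM2.
- by move=> c; apply: meq; apply: mcnt; exact: mGv.
- by apply: meq; apply: mcnt; exact: measurable_cst.
Qed.

Lemma mT1 i : measurable [set z : DM | sD z i < at1D z].
Proof.
rewrite /at1D; apply: (m_at spec1 (fun z g => sD z i < g) spec1_uniq).
- by move=> z g [].
- exact: mM1.
- by move=> c; apply: mlt; [exact: msD | exact: mGv].
- by apply: mlt; [exact: msD | exact: measurable_cst].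
Qed.

Lemma mT2 i : measurable [set z : DM | sD z i < at2D z].
Proof.
rewrite /at2D; apply: (m_at spec2 (fun z g => sD z i < g) spec2_uniq).
- by move=> z g [].
- exact: mM2.
- by move=> c; apply: mlt; [exact: msD | exact: mGv].
- by apply: mlt; [exact: msD | exact: measurable_cst].
Qed.


Lemma mZevent d (Omega : measurableType d) (Xs : 'I_n.+1 -> Omega -> 'rV[R]_p) (Ys : 'I_n.+1 -> Omega -> R)
  (hXs : forall i k, measurable_fun setT (fun w => Xs i w ord0 k))
  (hYs : forall i, measurable_fun setT (Ys i)) i A B :
  (forall k, measurable (A k)) -> measurable B -> measurable (Zevent Xs Ys i A B).
Proof.
move=> mA mB.
have -> : Zevent Xs Ys i A B = (\bigcap_(k in [set: 'I_p]) ((fun w => Xs i w ord0 k) @^-1` A k)) `&` (Ys i @^-1` B).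
  by apply/seteqP; split => w /= [h1 h2]; split => // k; [move=> _|]; apply: h1.
apply: measurableI.
  apply: fin_bigcap_measurable; first exact: finite_finset.
  by move=> k _; rewrite -[Z0 in measurable Z0]setTI; exact: (hXs i k measurableT _ (mA k)).
by rewrite -[Z0 in measurable Z0]setTI; exact: (hYs i measurableT _ mB).
Qed.

Lemma mZgen d (Omega : measurableType d) (Xs : 'I_n.+1 -> Omega -> 'rV[R]_p) (Ys : 'I_n.+1 -> Omega -> R)
  (hXs : forall i k, measurable_fun setT (fun w => Xs i w ord0 k))
  (hYs : forall i, measurable_fun setT (Ys i)) :
  measurable_fun [set: Omega] ((fun w i => (Xs i w, Ys i w)) : Omega -> DM).
Proof.
apply: measurability; first reflexivity.
move=> _ [_ [A [B [mA [mB ->]]]] <-]; rewrite setTI.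
rewrite (_ : _ @^-1` _ = \bigcap_(i in [set: 'I_n.+1]) Zevent Xs Ys i (A i) (B i)).
  apply: fin_bigcap_measurable; first exact: finite_finset.
  by move=> i _; apply: mZevent.
by apply/seteqP; split => w /= h i; [move=> _|]; apply: h.
Qed.

Variables (d : measure_display) (Omega : measurableType d) (P : probability Omega R).
Variables (X : 'I_n.+1 -> Omega -> 'rV[R]_p) (Y : 'I_n.+1 -> Omega -> R) (U : Omega -> R).
Hypothesis hX : forall i k, measurable_fun setT (fun w => X i w ord0 k).
Hypothesis hY : forall i, measurable_fun setT (Y i).
Hypothesis hU : measurable_fun setT U.
Hypothesis hid : forall (i : 'I_n.+1) (A : 'I_p -> set R) (B : set R),
     (forall k, measurable (A k)) -> measurable B ->
     P (Zevent X Y i A B) = P (Zevent X Y ord0 A B).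
Hypothesis hind : forall (A : 'I_n.+1 -> 'I_p -> set R) (B : 'I_n.+1 -> set R) (C : set R),
     (forall i k, measurable (A i k)) -> (forall i, measurable (B i)) -> measurable C ->
     P (\bigcap_(i in [set: 'I_n.+1]) Zevent X Y i (A i) (B i) `&` U @^-1` C) =
     ((\prod_(i < n.+1) P (Zevent X Y i (A i) (B i))) * P (U @^-1` C))%E.
Hypothesis hUunif : forall C : set R, measurable C ->
     P (U @^-1` C) = lebesgue_measure (C `&` `[0, 1]).

Definition Zf (w : Omega) : DM := fun i => (X i w, Y i w).
Definition Zs (s : 'S_n.+1) (w : Omega) : DM := fun i => (X (s i) w, Y (s i) w).

Lemma mZf : measurable_fun [set: Omega] Zf.
Proof. exact: mZgen. Qed.

Lemma mZs s : measurable_fun [set: Omega] (Zs s).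
Proof. exact: (@mZgen d Omega (fun i => X (s i)) (fun i => Y (s i)) (fun i => hX (s i)) (fun i => hY (s i))). Qed.

Lemma mpreZ (S : set DM) : measurable S -> measurable (Zf @^-1` S).
Proof. by move=> mS; rewrite -[Z0 in measurable Z0]setTI; exact: mZf. Qed.

Lemma mpreZs s (S : set DM) : measurable S -> measurable (Zs s @^-1` S).
Proof. by move=> mS; rewrite -[Z0 in measurable Z0]setTI; exact: mZs. Qed.

Lemma mpreU (C : set R) : measurable C -> measurable (U @^-1` C).
Proof. by move=> mC; rewrite -[Z0 in measurable Z0]setTI; exact: hU. Qed.

Lemma ePW (A : set Omega) : measurable A -> P A = (fine (P A))%:E.
Proof. by move=> mA; rewrite fineK // fin_num_measure. Qed.

Arguments mpreU [C].
Arguments mpreZ [S].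
Arguments mpreZs s [S].
Arguments ePW [A].

Lemma key (s : 'S_n.+1) (C : set R) : measurable C -> forall S : set DM, measurable S ->
  P (Zf @^-1` S `&` U @^-1` C) = (P (Zs s @^-1` S) * P (U @^-1` C))%E.
Proof.
move=> mC; have mW := mpreU mC.
apply: (@dynkin_induction _ DM (@data_rects R n p)
  (fun S => P (Zf @^-1` S `&` U @^-1` C) = (P (Zs s @^-1` S) * P (U @^-1` C))%E)).
- by [].
- move=> _ _ [A1 [B1 [mA1 [mB1 ->]]]] [A2 [B2 [mA2 [mB2 ->]]]].
  exists (fun i k => A1 i k `&` A2 i k), (fun i => B1 i `&` B2 i).
  split; first by move=> i k; exact: measurableI.
  split; first by move=> i; exact: measurableI.
  apply/seteqP; split => z /=.
  + move=> [h1 h2] i; split; last by split; [exact: (h1 i).2 | exact: (h2 i).2].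
    by move=> k; split; [exact: (h1 i).1 | exact: (h2 i).1].
  + move=> h; split => i; (split; [move=> k; case: ((h i).1 k) => //| case: (h i).2 => //]).
- by rewrite !preimage_setT setTI probability_setT mul1e.
- move=> _ [A [B [mA [mB ->]]]].
  have e1 : Zf @^-1` [set z : D | forall i, (forall k, A i k ((z i).1 ord0 k)) /\ B i (z i).2]
     = \bigcap_(i in [set: 'I_n.+1]) Zevent X Y i (A i) (B i).
    by apply/seteqP; split => w /= h i; [move=> _|]; apply: h.
  have e2 : Zs s @^-1` [set z : D | forall i, (forall k, A i k ((z i).1 ord0 k)) /\ B i (z i).2]
     = \bigcap_(i in [set: 'I_n.+1]) Zevent X Y i (A (s^-1 i)%g) (B (s^-1 i)%g).
    apply/seteqP; split => w /= h i.
    + by move=> _; have := h (s^-1 i)%g; rewrite permKV.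
    + by have := h (s i) I; rewrite /Zevent /= permK.
  rewrite e1 e2 hind //.
  have h2 := hind (fun i => A (s^-1 i)%g) (fun i => B (s^-1 i)%g) setT (fun i => mA _) (fun i => mB _) measurableT.
  rewrite preimage_setT setIT probability_setT mule1 in h2; rewrite h2.
  congr (_ * _)%E.
  rewrite (eq_bigr (fun i => P (Zevent X Y ord0 (A i) (B i)))); last first.
    by move=> i _; apply: hid.
  rewrite [RHS](eq_bigr (fun i => P (Zevent X Y ord0 (A (s^-1 i)%g) (B (s^-1 i)%g)))); last first.
    by move=> i _; apply: hid.
  by rewrite [LHS](reindex_inj (@perm_inj _ (s^-1)%g)).
- move=> S' mS' h.
  have eD : P (U @^-1` C `\` Zf @^-1` S') = (P (U @^-1` C) - P (Zf @^-1` S' `&` U @^-1` C))%E.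
    rewrite measureD //; first [by rewrite setIC | exact: mpreZ |
      by rewrite (le_lt_trans (probability_le1 _ _)) // ltry].
  rewrite -!preimage_setC setIC -setDE eD h probability_setC; last exact: mpreZs.
  rewrite (ePW mW) (ePW (mpreZs s mS')).
  by rewrite -EFinM -EFinB -EFinB -EFinM; congr EFin; ring.
- move=> F mF tF hF.
  rewrite !preimage_bigcup setI_bigcupl.
  have e1 : P (\bigcup_(k in [set: nat]) (Zf @^-1` F k `&` U @^-1` C)) =
      (\sum_(k <oo | k \in [set: nat]) P (Zf @^-1` F k `&` U @^-1` C))%E.
    rewrite measure_bigcup //.
      by move=> k _; apply: measurableI => //; exact: mpreZ.
    move=> i j _ _ [w /= [[h1 _] [h2 _]]]; apply: tF => //.
    by exists (Zf w); split; [exact: h1 | exact: h2].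
  have e2 : P (\bigcup_(k in [set: nat]) (Zs s @^-1` F k)) =
      (\sum_(k <oo | k \in [set: nat]) P (Zs s @^-1` F k))%E.
    rewrite measure_bigcup //.
      by move=> k _; exact: mpreZs.
    move=> i j _ _ [w /= [h1 h2]]; apply: tF => //.
    by exists (Zs s w); split; [exact: h1 | exact: h2].
  rewrite e1 e2.
  under eq_eseriesr do rewrite hF.
  rewrite (ePW mW); under eq_eseriesr do rewrite muleC.
  by rewrite nneseriesZl 1?muleC.
Qed.


Lemma indep (S : set DM) (C : set R) : measurable S -> measurable C ->
  P (Zf @^-1` S `&` U @^-1` C) = (P (Zf @^-1` S) * P (U @^-1` C))%E.
Proof.
move=> mS mC; rewrite (key 1%g C mC S mS).
have -> : Zs 1%g = Zf.
  by apply: funext => w; apply: funext => i; rewrite /Zs /Zf perm1.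
by [].
Qed.

Lemma exch (s : 'S_n.+1) (S : set DM) : measurable S ->
  P (Zf @^-1` S) = P (Zs s @^-1` S).
Proof.
move=> mS; have := key s setT measurableT S mS.
by rewrite preimage_setT setIT probability_setT mule1.
Qed.

Arguments exch s [S].

Arguments indep [S C].

Lemma sum_pr (I : finType) (A : I -> set Omega) (B : set Omega) (m : R) :
  0 <= m -> (forall i, measurable (A i)) -> measurable B ->
  (forall w, \sum_i \1_(A i) w = m * \1_B w) ->
  \sum_i fine (P (A i)) = m * fine (P B).
Proof.
move=> m0 mA mB h.
suff e : ((\sum_i fine (P (A i)))%:E = (m * fine (P B))%:E) by case: e.
rewrite EFinM -sumEFin.
under eq_bigr do rewrite -ePW //.
rewrite -(ePW mB).
transitivity (\sum_i \int[P]_(x in setT) (\1_(A i) x)%:E)%E.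
  by apply: eq_bigr => i _; rewrite integral_indic // setIT.
have mf : forall i, measurable_fun setT (fun x => (\1_(A i) x)%:E : \bar R).
  by move=> i; apply/measurable_EFinP; exact: measurable_indic.
have f0 : forall i x, setT x -> (0 <= (\1_(A i) x)%:E :> \bar R)%E.
  by move=> i x _; rewrite lee_fin indicE.
have e := @ge0_integral_sum _ _ _ P setT measurableT I (fun i x => (\1_(A i) x)%:E) mf f0 (index_enum I).
rewrite -e.
transitivity (\int[P]_(x in setT) (m%:E * (\1_B x)%:E))%E.
  by apply: eq_integral => x _; rewrite sumEFin h EFinM.
rewrite ge0_integralZl_EFin //; first [by rewrite integral_indic // setIT |
  by move=> x _; rewrite lee_fin indicE | by apply/measurable_EFinP; exact: measurable_indic].
Qed.

Lemma probU_le (c : R) : 0 <= c <= 1 -> fine (P (U @^-1` `]-oo, c])) = c.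
Proof.
move=> /andP[c0 c1].
rewrite hUunif; last exact: measurable_itv.
have -> : [set` `]-oo, c]] `&` [set` `[0, 1]] = [set` `[0, c]] :> set R.
  apply/seteqP; split => x /=; rewrite !in_itv /=.
  + by move=> [-> /andP[-> _]].
  + by move=> /andP[-> xc]; split => //; apply: le_trans c1.
rewrite lebesgue_measure_itv /=.
rewrite lte_fin; case: ifPn => [_|]; first by rewrite /= oppr0 addr0.
by rewrite -leNgt => cle; apply/esym/eqP; rewrite eq_le cle.
Qed.


Definition cntN (z : D) (g : R) : nat := \sum_(i < n.+1) ((sD z i < g)%R : bool).

Lemma cntRN z g : cntR z g = (cntN z g)%:R.
Proof. by rewrite /cntR /cntN natr_sum. Qed.

Lemma cntN_lt z g : (cntN z g < n.+2)%N.
Proof.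
rewrite ltnS /cntN; apply: (@leq_trans (\sum_(i < n.+1) 1%N)).
  by apply: leq_sum => i _; case: (_ < _).
by rewrite sum1_card card_ord.
Qed.

Definition Kset (k : 'I_n.+2 * 'I_n.+2) : set DM :=
  [set z | cntR z (at1D z) = k.1%:R /\ cntR z (at2D z) = k.2%:R].
Definition T1 i : set DM := [set z | sD z i < at1D z].
Definition T2 i : set DM := [set z | sD z i < at2D z].
Definition kz (z : D) : 'I_n.+2 * 'I_n.+2 :=
  (inord (cntN z (at1D z)), inord (cntN z (at2D z))).

Lemma mKset k : measurable (Kset k).
Proof. exact: (measurableI _ _ (mcnt1 _) (mcnt2 _)). Qed.

Lemma Kset_kz z k : Kset k z <-> k = kz z.
Proof.
split.
- case: k => k1 k2 /= [e1 e2]; rewrite /kz; congr pair; apply: val_inj;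
  rewrite /= inordK ?cntN_lt //; apply/eqP; rewrite -(eqr_nat R) -cntRN ?e1 ?e2 //.
- by move=> ->; rewrite /Kset /kz /= !inordK ?cntN_lt // -!cntRN.
Qed.

Lemma sum_indic (I : finType) (A : I -> set Omega) (B : set Omega) w (i0 : I) :
  (forall i, A i w -> i = i0) -> (A i0 w <-> B w) -> \sum_i \1_(A i) w = \1_B w :> R.
Proof.
move=> h1 h2; rewrite (bigD1 i0) //= big1 ?addr0; last first.
  move=> i ne; rewrite indicE memNset // => /h1 e.
  by rewrite e eqxx in ne.
rewrite !indicE; case: (pselect (B w)) => hb.
  by rewrite !mem_set //; apply/h2.
by rewrite !memNset // => /h2.
Qed.

Lemma Zs_comp s w : Zs s w = Zf w \o s.
Proof. by []. Qed.

Lemma count_T1 k : fine (P (Zf @^-1` (Kset k `&` T1 ord_max))) =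
  k.1%:R / n.+1%:R * fine (P (Zf @^-1` Kset k)).
Proof.
have mKT i : measurable (Kset k `&` T1 i) by apply: measurableI; [exact: mKset | exact: mT1].
have ex i : fine (P (Zf @^-1` (Kset k `&` T1 i))) = fine (P (Zf @^-1` (Kset k `&` T1 ord_max))).
  rewrite (exch (tperm i ord_max) (mKT i)); congr (fine (P _)).
  apply/seteqP; split => w /=; rewrite Zs_comp /Kset /T1 /=;
    by rewrite !cntR_perm !at1D_perm !at2D_perm sD_perm tpermL.
have := @sum_pr _ (fun i => Zf @^-1` (Kset k `&` T1 i)) (Zf @^-1` Kset k) k.1%:R
  (ler0n _ _) (fun i => mpreZ (mKT i)) (mpreZ (mKset k)).
rewrite (eq_bigr (fun=> fine (P (Zf @^-1` (Kset k `&` T1 ord_max))))); last by move=> i _; exact: ex.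
rewrite sumr_const card_ord => h.
have hpt : forall w, \sum_i \1_(Zf @^-1` (Kset k `&` T1 i)) w = k.1%:R * \1_(Zf @^-1` Kset k) w :> R.
  move=> w; case: (pselect (Kset k (Zf w))) => hK.
    rewrite indicE mem_set // mulr1; case: (hK) => e1 _; rewrite -e1 /cntR.
    apply: eq_bigr => i _; rewrite indicE.
    case: (boolP (sD (Zf w) i < at1D (Zf w))) => hi.
      by rewrite mem_set //; split.
    by rewrite memNset //= => -[_]; exact/negP.
  rewrite indicE memNset // mulr0 big1 // => i _.
  by rewrite indicE memNset //= => -[].
move: (h hpt); rewrite -[fine (P _) *+ _]mulr_natl => {}h.
have hn : n.+1%:R != 0 :> R by rewrite pnatr_eq0.
by rewrite mulrAC -h mulrC mulrA mulVf // mul1r.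
Qed.

Lemma count_T2 k : fine (P (Zf @^-1` (Kset k `&` T2 ord_max))) =
  k.2%:R / n.+1%:R * fine (P (Zf @^-1` Kset k)).
Proof.
have mKT i : measurable (Kset k `&` T2 i) by apply: measurableI; [exact: mKset | exact: mT2].
have ex i : fine (P (Zf @^-1` (Kset k `&` T2 i))) = fine (P (Zf @^-1` (Kset k `&` T2 ord_max))).
  rewrite (exch (tperm i ord_max) (mKT i)); congr (fine (P _)).
  apply/seteqP; split => w /=; rewrite Zs_comp /Kset /T2 /=;
    by rewrite !cntR_perm !at1D_perm !at2D_perm sD_perm tpermL.
have := @sum_pr _ (fun i => Zf @^-1` (Kset k `&` T2 i)) (Zf @^-1` Kset k) k.2%:R
  (ler0n _ _) (fun i => mpreZ (mKT i)) (mpreZ (mKset k)).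
rewrite (eq_bigr (fun=> fine (P (Zf @^-1` (Kset k `&` T2 ord_max))))); last by move=> i _; exact: ex.
rewrite sumr_const card_ord => h.
have hpt : forall w, \sum_i \1_(Zf @^-1` (Kset k `&` T2 i)) w = k.2%:R * \1_(Zf @^-1` Kset k) w :> R.
  move=> w; case: (pselect (Kset k (Zf w))) => hK.
    rewrite indicE mem_set // mulr1; case: (hK) => _ e1; rewrite -e1 /cntR.
    apply: eq_bigr => i _; rewrite indicE.
    case: (boolP (sD (Zf w) i < at2D (Zf w))) => hi.
      by rewrite mem_set //; split.
    by rewrite memNset //= => -[_]; exact/negP.
  rewrite indicE memNset // mulr0 big1 // => i _.
  by rewrite indicE memNset //= => -[].
move: (h hpt); rewrite -[fine (P _) *+ _]mulr_natl => {}h.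
have hn : n.+1%:R != 0 :> R by rewrite pnatr_eq0.
by rewrite mulrAC -h mulrC mulrA mulVf // mul1r.
Qed.


Arguments at1D_eq {z g}.
Arguments at2D_eq {z g}.
Arguments Kset_kz {z k}.
Arguments sum_indic [I A B w i0].
Arguments probU_le [c].

Definition ck (k : 'I_n.+2 * 'I_n.+2) : R :=
  (alpha - k.2%:R / n.+1%:R) / (k.1%:R / n.+1%:R - k.2%:R / n.+1%:R).
Definition Cle k : set R := [set` `]-oo, ck k]].
Definition Aset k : set Omega :=
  (Zf @^-1` (Kset k `&` T1 ord_max) `&` U @^-1` Cle k) `|`
  (Zf @^-1` (Kset k `&` T2 ord_max) `&` U @^-1` ~` Cle k).

Lemma main_sec (at1 at2 : Omega -> R) :
  (forall w, spec1 (Zf w) (at1 w)) -> (forall w, spec2 (Zf w) (at2 w)) ->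
  P [set w | sD (Zf w) ord_max < (if U w <= (alpha - covD (Zf w) (at2 w)) /
        (covD (Zf w) (at1 w) - covD (Zf w) (at2 w)) then at1 w else at2 w)] = alpha%:E.
Proof.
move=> h1 h2.
have e1 w : at1 w = at1D (Zf w) by rewrite (at1D_eq (h1 w)).
have e2 w : at2 w = at2D (Zf w) by rewrite (at2D_eq (h2 w)).
set E := [set w | _].
have mC k : measurable (Cle k) by exact: measurable_itv.
have mKT1 k : measurable (Kset k `&` T1 ord_max) by apply: measurableI; [exact: mKset | exact: mT1].
have mKT2 k : measurable (Kset k `&` T2 ord_max) by apply: measurableI; [exact: mKset | exact: mT2].
have mA k : measurable (Aset k).
  apply: measurableU; apply: measurableI.
  - exact: mpreZ.
  - exact: mpreU.
  - exact: mpreZ.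
  - apply: mpreU; exact: measurableC.
have cov1 w : covD (Zf w) (at1 w) = (kz (Zf w)).1%:R / n.+1%:R.
  by rewrite covDE e1 cntRN /kz /= inordK // cntN_lt.
have cov2 w : covD (Zf w) (at2 w) = (kz (Zf w)).2%:R / n.+1%:R.
  by rewrite covDE e2 cntRN /kz /= inordK // cntN_lt.
have hA w k : Aset k w -> k = kz (Zf w).
  by case=> -[[hK _] _]; apply/Kset_kz.
have hE w : Aset (kz (Zf w)) w <-> E w.
  have hK : Kset (kz (Zf w)) (Zf w) by apply/Kset_kz.
  rewrite /E /Aset /Cle /T1 /T2 /= -e1 -e2 cov1 cov2 in_itv /= /ck.
  case: ifPn => hu.
  - split; first by case=> [[[_ h] _]|[_ hn]] //; exfalso; apply: hn.
    by move=> h; left.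
  - split; first by case=> [[[_ h] hn]|[[_ h] _]] //; rewrite hn in hu.
    by move=> h; right; split => //; apply/negP.
have Eeq : E = \bigcup_(k in [set: 'I_n.+2 * 'I_n.+2]) Aset k.
  apply/seteqP; split => w.
  - by move=> /hE h; exists (kz (Zf w)).
  - by case=> k _ hk; have ek := hA w k hk; apply/hE; rewrite -ek.
have mE : measurable E.
  rewrite Eeq; apply: fin_bigcup_measurable; first exact: finite_finset.
  by move=> k _; exact: mA.
have s1 := @sum_pr _ Aset E 1 ler01 mA mE
  (fun w => etrans (sum_indic (hA w) (hE w)) (esym (mul1r _))).
have hK w k : Kset k (Zf w) -> k = kz (Zf w) by move/Kset_kz.
have hKT w : Kset (kz (Zf w)) (Zf w) <-> setT w by split => // _; apply/Kset_kz.
have s2 := @sum_pr _ (fun k => Zf @^-1` Kset k) setT 1 ler01 (fun k => mpreZ (mKset k)) measurableT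
  (fun w => etrans (@sum_indic _ (fun k => Zf @^-1` Kset k) setT w _ (hK w) (hKT w)) (esym (mul1r _))).
have PA k : fine (P (Aset k)) = alpha * fine (P (Zf @^-1` Kset k)).
  have mS1 := mpreZ (mKT1 k); have mS2 := mpreZ (mKT2 k); have mW := mpreU (mC k).
  have eU : P (Aset k) = (P (Zf @^-1` (Kset k `&` T1 ord_max) `&` U @^-1` Cle k) +
                          P (Zf @^-1` (Kset k `&` T2 ord_max) `&` U @^-1` ~` Cle k))%E.
    rewrite /Aset measureU //; first [exact: measurableI | apply: measurableI => //; apply: mpreU; exact: measurableC |
      by apply/seteqP; split => w // [[_ hw1] [_ hw2]]; exact: hw2 hw1].
  have i1 := indep (mKT1 k) (mC k).
  have i2 := indep (mKT2 k) (measurableC (mC k)).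
  have pc : P (U @^-1` ~` Cle k) = (1 - P (U @^-1` Cle k))%E.
    by rewrite -preimage_setC probability_setC.
  rewrite eU i1 i2 pc (ePW mS1) (ePW mS2) (ePW mW) -EFinB -!EFinM -EFinD /=.
  rewrite count_T1 count_T2.
  case: (pselect (exists w, Kset k (Zf w))) => [[w hKw] | hn].
  - have ek : k = kz (Zf w) by apply/Kset_kz.
    have ha1 : alpha <= k.1%:R / n.+1%:R by have := (h1 w).2.1; rewrite cov1 ek.
    have ha2 : k.2%:R / n.+1%:R < alpha by have := (h2 w).2.1; rewrite cov2 ek.
    have c01 : 0 <= ck k <= 1.
      rewrite /ck; apply/andP; split.
        by apply: divr_ge0; rewrite subr_ge0 ltW // (lt_le_trans ha2 ha1).
      rewrite ler_pdivrMr ?subr_gt0 ?(lt_le_trans ha2 ha1) // mul1r.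
      by rewrite lerD2r.
    rewrite (probU_le c01) /ck.
    have hab : k.1%:R / n.+1%:R - k.2%:R / n.+1%:R != 0 :> R.
      by rewrite subr_eq0 gt_eqF // (lt_le_trans ha2 ha1).
    move: hab; set a := k.1%:R / n.+1%:R; set b := k.2%:R / n.+1%:R => hab.
    by field.
  - have -> : fine (P (Zf @^-1` Kset k)) = 0.
      rewrite (_ : Zf @^-1` Kset k = set0) ?measure0 //.
      by apply/seteqP; split => w // hw; apply: hn; exists w.
    by rewrite !(mulr0, mul0r) addr0.
rewrite (ePW mE) -[fine (P E)]mul1r -s1.
under eq_bigr do rewrite PA.
by rewrite -mulr_sumr s2 probability_setT /= !mulr1.
Qed.


Lemma G0E (w : Omega) g :
  (Gamma (pmD (Zf w)) `|` [set 0]) g <-> G0D (Zf w) g.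
Proof.
split.
- by case=> [[i [A ->]]|->]; [exists (Some (i, A)) | exists None].
- by case=> [[[i A]|] ->]; [left; exists i, A | right].
Qed.

Lemma main_final (at1 at2 : Omega -> R) :
  let z w := fun i => (X i w, Y i w) in
  let vs w := fun j => V (z w) (z w j) in
  let pm w := pH (fun i j => H (fun k => X k w) (X i w) (X j w)) in
  let G0 w := Gamma (pm w) `|` [set 0] in
  (forall w, G0 w (at1 w) /\ alpha <= cov_frac (vs w) (pm w) (at1 w) /\
     forall g, G0 w g -> alpha <= cov_frac (vs w) (pm w) g -> at1 w <= g) ->
  (forall w, G0 w (at2 w) /\ cov_frac (vs w) (pm w) (at2 w) < alpha /\
     forall g, G0 w g -> cov_frac (vs w) (pm w) g < alpha -> g <= at2 w) ->
  let a1 w := cov_frac (vs w) (pm w) (at1 w) in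
  let a2 w := cov_frac (vs w) (pm w) (at2 w) in
  let atl w := if U w <= (alpha - a2 w) / (a1 w - a2 w) then at1 w else at2 w in
  P [set w | ((vs w ord_max)%:E <= Qd (pm w ord_max) (vals_inf (vs w)) (atl w))%E]
  = alpha%:E.
Proof.
move=> z vs pm G0 h1 h2 a1 a2 atl.
have h1' w : spec1 (Zf w) (at1 w).
  have [g1 [g2 g3]] := h1 w; split; first exact/(G0E w).
  by split => // g' /(G0E w) hg' hc; exact: g3.
have h2' w : spec2 (Zf w) (at2 w).
  have [g1 [g2 g3]] := h2 w; split; first exact/(G0E w).
  by split => // g' /(G0E w) hg' hc; exact: g3.
have hsum w : \sum_(j < n.+1 | (vals_inf (vs w) j < (vs w ord_max)%:E)%E) pm w ord_max j
    = sD (Zf w) ord_max.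
  rewrite /sD; apply: eq_bigl => j; rewrite /vals_inf; case: eqP => [->|_].
    by rewrite ltxx; apply/negbTE; rewrite -leNgt leey.
  by rewrite lte_fin.
rewrite -(main_sec at1 at2 h1' h2'); congr (P _); apply/seteqP; split => w /=.
- by rewrite Qd_leE ?hsum //; exact: (pmD_ge0 (Zf w) ord_max).
- by rewrite Qd_leE ?hsum //; exact: (pmD_ge0 (Zf w) ord_max).
Qed.
End DataSec.

Theorem theorem2 (R : realType) (d : measure_display) (Omega : measurableType d)
  (P : probability Omega R) (n p : nat)
  (X : 'I_n.+1 -> Omega -> 'rV[R]_p) (Y : 'I_n.+1 -> Omega -> R) (U : Omega -> R)
  (* measurability of the data and of the auxiliary randomization *)
  (hX : forall i k, measurable_fun setT (fun w => X i w ord0 k))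
  (hY : forall i, measurable_fun setT (Y i))
  (hU : measurable_fun setT U)
  (* Z_1, ..., Z_(n+1) identically distributed *)
  (hid : forall (i : 'I_n.+1) (A : 'I_p -> set R) (B : set R),
     (forall k, measurable (A k)) -> measurable B ->
     P (Zevent X Y i A B) = P (Zevent X Y ord0 A B))
  (* Z_1, ..., Z_(n+1), U mutually independent *)
  (hind : forall (A : 'I_n.+1 -> 'I_p -> set R) (B : 'I_n.+1 -> set R) (C : set R),
     (forall i k, measurable (A i k)) -> (forall i, measurable (B i)) -> measurable C ->
     P (\bigcap_(i in [set: 'I_n.+1]) Zevent X Y i (A i) (B i) `&` U @^-1` C) =
     ((\prod_(i < n.+1) P (Zevent X Y i (A i) (B i))) * P (U @^-1` C))%E)
  (* U ~ Uniform[0,1] *)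
  (hUunif : forall C : set R, measurable C ->
     P (U @^-1` C) = lebesgue_measure (C `&` `[0, 1]))
  (* score function V(z; Zset), symmetric in the data *)
  (V : ('I_n.+1 -> 'rV[R]_p * R) -> 'rV[R]_p * R -> R)
  (hVsym : forall (s : 'S_n.+1) z t, V (z \o s) t = V z t)
  (hVmeas : forall j, data_measurable (fun z => V z (z j)))
  (* localizer H(x, x'; Xset), symmetric in the data *)
  (H : ('I_n.+1 -> 'rV[R]_p) -> 'rV[R]_p -> 'rV[R]_p -> R)
  (hHsym : forall (s : 'S_n.+1) xs x x', H (xs \o s) x x' = H xs x x')
  (hH01 : forall xs x x', 0 <= H xs x x' <= 1)
  (hHdiag : forall xs x, H xs x x = 1)
  (hHmeas : forall i j, xdata_measurable (fun xs => H xs (xs i) (xs j)))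
  (alpha : R) (halpha : 0 < alpha < 1)
  (at1 at2 : Omega -> R) :
  let z w := fun i => (X i w, Y i w) in
  let vs w := fun j => V (z w) (z w j) in
  let pm w := pH (fun i j => H (fun k => X k w) (X i w) (X j w)) in
  let G0 w := Gamma (pm w) `|` [set 0] in
  (* at1 = smallest value of Gamma u {0} with alpha_1 >= alpha *)
  (forall w, G0 w (at1 w) /\ alpha <= cov_frac (vs w) (pm w) (at1 w) /\
     forall g, G0 w g -> alpha <= cov_frac (vs w) (pm w) g -> at1 w <= g) ->
  (* at2 = largest value of Gamma u {0} with alpha_2 < alpha *)
  (forall w, G0 w (at2 w) /\ cov_frac (vs w) (pm w) (at2 w) < alpha /\
     forall g, G0 w g -> cov_frac (vs w) (pm w) g < alpha -> g <= at2 w) ->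
  let a1 w := cov_frac (vs w) (pm w) (at1 w) in
  let a2 w := cov_frac (vs w) (pm w) (at2 w) in
  (* randomized choice: at1 with probability (alpha - a2)/(a1 - a2), else at2 *)
  let atl w := if U w <= (alpha - a2 w) / (a1 w - a2 w) then at1 w else at2 w in
  P [set w | ((vs w ord_max)%:E <= Qd (pm w ord_max) (vals_inf (vs w)) (atl w))%E]
  = alpha%:E.
Proof.
by apply: main_final.
Qed.
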